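(* Let $Q$ be a finite connected quandle whose elements are labelled $1,2,\dots,n$, and assume the labelling satisfies: $\{j \in Q : R_j = R_1\} = \{1,2,\dots,s\}$, and for distinct $i,j \in \{1,\dots,s\}$ the pairs $(1,i)$ and $(1,j)$ lie in different orbits of the diagonal action of $\mathrm{Inn}(Q)$ on $Q\times Q$. For any oriented knot $K$, let $T$ be a $1$-tangle whose closure is $K$, and let $rm(T)$ be its reversed mirror image (a $1$-tangle whose closure is $rm(K)$). Then there exists a permutation $p$ of $\{1,\dots,s\}$ with $p\circ p=\mathrm{id}$ such that $$\Psi^1_Q(rm(K)) = \big(\mathrm{Col}^{1,p(1)}_Q(T),\mathrm{Col}^{1,p(2)}_Q(T),\dots,\mathrm{Col}^{1,p(s)}_Q(T)\big),$$ where $\Psi^1_Q(K') := (\mathrm{Col}^{1,1}_Q(T'),\dots,\mathrm{Col}^{1,s}_Q(T'))$ for a $1$-tangle $T'$ with closure $K'$.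
   Context: A quandle is a set $Q$ with a binary operation $*$ such that $a*a=a$ for all $a$; for all $b,c$ there is a unique $a$ with $a*b=c$; and $(a*b)*c=(a*c)*(b*c)$ for all $a,b,c$. The right translation $R_a:Q\to Q$ is $R_a(x)=x*a$; it is an automorphism. $\mathrm{Inn}(Q)$ is the subgroup of the symmetric group on $Q$ generated by all $R_a$; $Q$ is connected if $\mathrm{Inn}(Q)$ acts transitively on $Q$. $\mathrm{Inn}(Q)$ acts on $Q\times Q$ by $g(a,b)=(g(a),g(b))$. All knots are oriented; $r(K)$ is $K$ with reversed orientation, $m(K)$ its mirror image, $rm=r\circ m$. A $1$-tangle is a properly embedded oriented arc in a $3$-ball, considered up to isotopy fixing the boundary; diagrams are drawn oriented from top to bottom, with top arc $b_0$ and bottom arc $b_1$; its closure is the knot obtained by joining the endpoints by a trivial arc outside the disk (isotopy classes of knots and of $1$-tangles correspond bijectively). A coloring of a diagram by $Q$ is a map from the set of arcs to $Q$ such that at every crossing, if the over-arc has color $y$ and the incoming under-arc (with the standard sign convention) has color $x$, the other under-arc has color $x*y$; the end arcs of a $1$-tangle need not receive the same color. For $a,b\in Q$, $\mathrm{Col}^{a,b}_Q(T)$ denotes the number of colorings $C$ of $T$ by $Q$ with $C(b_0)=a$, $C(b_1)=b$; it is a knot invariant of the closure. *)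

(* Defs.v *)
From HB Require Import structures.
From mathcomp Require Import all_boot all_fingroup.
Set Implicit Arguments. Unset Strict Implicit. Unset Printing Implicit Defensive.

Section Quandle.
Variables (Q : finType) (op : Q -> Q -> Q).

Definition is_quandle : Prop :=
  [/\ (forall a, op a a = a),
      (forall b c, exists! a, op a b = c) &
      (forall a b c, op (op a b) c = op (op a c) (op b c))].

(* right translation R_a as a permutation of Q (it is one whenever op is a
   quandle operation; the default 1 is never used for quandles) *)
Definition Rperm (a : Q) : {perm Q} := insubd (1%g : {perm Q}) [ffun x => op x a].

Definition Inn : {group {perm Q}} := <<[set Rperm a | a in Q]>>%G.

Definition connected : Prop := forall a b : Q, exists2 g, g \in Inn & g a = b.

Definition same_orbit2 (x y : Q * Q) : Prop :=
  exists2 g, g \in Inn & (g x.1, g x.2) = y.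
End Quandle.

(* ---------- oriented 1-tangle diagrams ----------
   A diagram with m crossings is traversed from top to bottom.  It passes under
   the crossings 0,...,m-1 in this order; the arcs are 0,...,m, arc k being the
   piece between the (k-1)-th and k-th under-passage, so b_0 = arc 0 and
   b_1 = arc m.  At the k-th under-passage the incoming under-arc is arc k, the
   outgoing under-arc is arc k+1, the over-arc is [ov k], and [sg k] is the
   sign of the crossing (true = positive). *)
Record tangle := Tangle {
  ncr : nat;
  ov : {ffun 'I_ncr -> 'I_ncr.+1};
  sg : {ffun 'I_ncr -> bool}
}.

Definition arc_in (m : nat) (k : 'I_m) : 'I_m.+1 := widen_ord (leqnSn m) k.
Definition arc_out (m : nat) (k : 'I_m) : 'I_m.+1 := lift ord0 k.

Definition is_coloring (Q : finType) (op : Q -> Q -> Q) (T : tangle)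
  (c : {ffun 'I_(ncr T).+1 -> Q}) : bool :=
  [forall k : 'I_(ncr T),
     if sg T k then c (arc_out k) == op (c (arc_in k)) (c (ov T k))
     else c (arc_in k) == op (c (arc_out k)) (c (ov T k))].
Arguments is_coloring : clear implicits.

Definition Col (Q : finType) (op : Q -> Q -> Q) (a b : Q) (T : tangle) : nat :=
  #|[set c : {ffun 'I_(ncr T).+1 -> Q} |
      [&& @is_coloring Q op T c, c ord0 == a & c ord_max == b]]|.

(* reversed mirror image rm(T): reverse the orientation (then redraw from top to
   bottom, so the traversal order of crossings and arcs is reversed) and change
   every crossing (mirror), which flips all signs. *)
Definition rm (T : tangle) : tangle :=
  @Tangle (ncr T) [ffun k => rev_ord (ov T (rev_ord k))]
                  [ffun k => ~~ sg T (rev_ord k)].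

(* Main.v *)
Require Import Defs.
From mathcomp Require Import all_boot all_fingroup.
From mathcomp Require Import zify.
Set Implicit Arguments. Unset Strict Implicit. Unset Printing Implicit Defensive.

Lemma inj_le (aT bT : finType) (A : {set aT}) (B : {set bT}) (f : aT -> bT) :
  injective f -> (forall x, x \in A -> f x \in B) -> #|A| <= #|B|.
Proof.
move=> inj H; rewrite -(card_imset A inj); apply: subset_leq_card.
by apply/subsetP=> y /imsetP[x xA ->]; exact: H.
Qed.

Lemma rev_out m (k : 'I_m) : rev_ord (arc_out k) = arc_in (rev_ord k).
Proof. apply/val_inj; rewrite /= /bump /=; lia. Qed.
Lemma rev_in m (k : 'I_m) : rev_ord (arc_in k) = arc_out (rev_ord k).
Proof. apply/val_inj; rewrite /= /bump /=; have := ltn_ord k; lia. Qed.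
Lemma rev0 m : rev_ord (@ord0 m) = ord_max.
Proof. apply/val_inj; rewrite /= /bump /=; lia. Qed.
Lemma revmax m : rev_ord (@ord_max m) = ord0.
Proof. apply/val_inj; rewrite /= /bump /=; lia. Qed.

Section Q.
Variables (Q : finType) (op : Q -> Q -> Q).

Lemma Col_rm1 a b T : Col op b a T <= Col op a b (rm T).
Proof.
apply: (@inj_le _ _ _ _ (fun c : {ffun 'I_(ncr T).+1 -> Q} =>
   [ffun k => c (rev_ord k)] : {ffun 'I_(ncr (rm T)).+1 -> Q})).
  move=> c1 c2 /ffunP e; apply/ffunP=> k.
  by have := e (rev_ord k); rewrite !ffunE rev_ordK.
move=> c; rewrite !inE => /and3P[/forallP Hc /eqP H0 /eqP H1].
rewrite !ffunE rev0 revmax H0 H1 !eqxx !andbT.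
apply/forallP=> k; rewrite /= !ffunE rev_ordK rev_out rev_in.
have := Hc (rev_ord k); by case: (sg T (rev_ord k)).
Qed.

Lemma Col_rm2 a b T : Col op a b (rm T) <= Col op b a T.
Proof.
apply: (@inj_le _ _ _ _ (fun c : {ffun 'I_(ncr (rm T)).+1 -> Q} =>
   [ffun k => c (rev_ord k)] : {ffun 'I_(ncr T).+1 -> Q})).
  move=> c1 c2 /ffunP e; apply/ffunP=> k.
  by have := e (rev_ord k); rewrite !ffunE rev_ordK.
move=> c; rewrite !inE => /and3P[/forallP Hc /eqP H0 /eqP H1].
rewrite !ffunE rev0 revmax H0 H1 !eqxx !andbT.
apply/forallP=> k; rewrite !ffunE rev_out rev_in.
have := Hc (rev_ord k); rewrite /= !ffunE !rev_ordK.
by case: (sg T k).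
Qed.

Lemma Col_rm a b T : Col op a b (rm T) = Col op b a T.
Proof. by apply/eqP; rewrite eqn_leq Col_rm1 Col_rm2. Qed.

Definition homset : {set {perm Q}} :=
  [set g : {perm Q} | [forall x, forall y, g (op x y) == op (g x) (g y)]].

Lemma homset_group : group_set homset.
Proof.
apply/group_setP; split.
  by rewrite inE; apply/forallP=> x; apply/forallP=> y; rewrite !perm1.
move=> g h; rewrite !inE => /forallP Hg /forallP Hh.
apply/forallP=> x; apply/forallP=> y; rewrite !permM.
by rewrite (eqP (forallP (Hg x) y)) (eqP (forallP (Hh _) _)).
Qed.

Canonical homgroup := Group homset_group.

Lemma homP (g : {perm Q}) : g \in homset -> forall x y, g (op x y) = op (g x) (g y).
Proof. by rewrite inE => /forallP H x y; apply/eqP; exact: (forallP (H x) y). Qed.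

Hypothesis Hq : is_quandle op.

Lemma RpermE a x : Rperm op a x = op x a.
Proof.
rewrite -pvalE /Rperm insubdK ?ffunE //.
apply/injectiveP=> x1 x2; rewrite !ffunE => e.
case: Hq => _ Hu _; case: (Hu a (op x1 a)) => z [_ U].
by rewrite -(U x1 erefl) -(U x2 (esym e)).
Qed.

Lemma Inn_hom g : g \in Inn op -> g \in homset.
Proof.
move=> gI; suff: Inn op \subset homgroup by move/subsetP; apply.
rewrite gen_subG; apply/subsetP=> r /imsetP[a _ ->].
rewrite inE; apply/forallP=> x; apply/forallP=> y; rewrite !RpermE.
by case: Hq => _ _ ->.
Qed.

Lemma Col_hom_le (g : {perm Q}) a b T : g \in homset ->
  Col op a b T <= Col op (g a) (g b) T.
Proof.
move=> gH; have hom := homP gH.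
apply: (@inj_le _ _ _ _ (fun c : {ffun 'I_(ncr T).+1 -> Q} =>
   [ffun k => g (c k)] : {ffun 'I_(ncr T).+1 -> Q})).
  move=> c1 c2 /ffunP e; apply/ffunP=> k.
  by have := e k; rewrite !ffunE => /perm_inj.
move=> c; rewrite !inE => /and3P[/forallP Hc /eqP H0 /eqP H1].
rewrite !ffunE H0 H1 !eqxx !andbT.
apply/forallP=> k; rewrite !ffunE.
have := Hc k; case: (sg T k) => /eqP ->; by rewrite hom.
Qed.

Lemma Col_hom (g : {perm Q}) a b T : g \in Inn op ->
  Col op (g a) (g b) T = Col op a b T.
Proof.
move=> gI; apply/eqP; rewrite eqn_leq.
have H1 := @Col_hom_le g a b T (Inn_hom gI).
have H2 := @Col_hom_le g^-1 (g a) (g b) T.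
rewrite !permK in H2; rewrite H1 andbT; apply: H2.
by apply: Inn_hom; rewrite groupV.
Qed.

Lemma R_conj g a b : g \in Inn op -> Rperm op a = Rperm op b ->
  Rperm op (g a) = Rperm op (g b).
Proof.
move=> gI e; have hom := homP (Inn_hom gI).
apply/permP=> y; rewrite !RpermE.
rewrite -{1 2}(permKV g y) -!hom -!RpermE e //.
Qed.

End Q.

Theorem mainTheorem1 (n s : nat) (op : 'I_n.+1 -> 'I_n.+1 -> 'I_n.+1)
  (Hq : is_quandle op) (Hconn : connected op)
  (Hsn : s <= n.+1)
  (Hs : forall j : 'I_n.+1, Rperm op j = Rperm op ord0 <-> j < s)
  (Horb : forall i j : 'I_n.+1, i < s -> j < s -> i != j ->
            ~ same_orbit2 op (ord0, i) (ord0, j))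
  (T : tangle) :
  exists p : {perm 'I_s},
    (p * p = 1)%g /\
    forall i : 'I_s,
      Col op ord0 (inord i) (rm T) = Col op ord0 (inord (p i)) T.
Proof.
pose gi (x : 'I_n.+1) : {perm 'I_n.+1} :=
  odflt 1%g [pick g in Inn op | g x == ord0].
have giP x : gi x \in Inn op /\ gi x x = ord0.
  rewrite /gi; case: pickP => [g /andP[gI /eqP ->]|none] //.
  case: (Hconn x ord0) => g gI gx.
  by have := none g; rewrite gI gx eqxx.
have lts (g : {perm 'I_n.+1}) (x : 'I_n.+1) : g \in Inn op -> x < s -> g x = ord0 -> g ord0 < s.
  move=> gI xs gx; apply: (proj1 (Hs _)); rewrite -[X in _ = Rperm op X]gx.
  by apply: R_conj => //; apply: esym; apply: (proj2 (Hs _)).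
have uniq (g h : {perm 'I_n.+1}) (x : 'I_n.+1) : g \in Inn op -> h \in Inn op -> x < s ->
    g x = ord0 -> h x = ord0 -> g ord0 = h ord0.
  move=> gI hI xs gx hx; apply/eqP; apply/negPn/negP => ne.
  apply: (Horb _ _ (lts _ _ gI xs gx) (lts _ _ hI xs hx) ne).
  exists (g^-1 * h)%g; first by rewrite groupM ?groupV.
  by rewrite /= !permM -{1}gx permK hx permK.
pose f (i : 'I_s) : 'I_s := insubd i (val (gi (inord i) ord0)).
have inordi (i : 'I_s) : val (inord i : 'I_n.+1) = i.
  by apply: inordK; rewrite // (leq_trans (ltn_ord i)).
have fv (i : 'I_s) : val (f i) = gi (inord i) ord0.
  rewrite /f val_insubd; case: (giP (inord i)) => gI gx.
  by rewrite (lts _ _ gI _ gx) // inordi.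
have ff i : f (f i) = i.
  apply/val_inj; rewrite fv.
  have -> : (inord (f i) : 'I_n.+1) = gi (inord i) ord0.
    by apply/val_inj; rewrite inordi fv.
  case: (giP (inord i)) => gI gx.
  have xs : (inord i : 'I_n.+1) < s by rewrite inordi.
  have ys := lts _ _ gI xs gx.
  case: (giP (gi (inord i) ord0)) => hI hx.
  rewrite (uniq _ ((gi (inord i))^-1)%g _ hI _ ys hx) ?groupV ?permK ?inordi //.
  by rewrite -{1}gx permK inordi.
have finj : injective f by apply: (can_inj ff).
exists (perm finj); split.
  by apply/permP=> i; rewrite permM perm1 !permE ff.
move=> i; rewrite Col_rm permE.
case: (giP (inord i)) => gI gx.
rewrite -(Col_hom Hq _ _ _ gI) gx; congr Col.
by apply/val_inj; rewrite /= inordi fv.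
Qed.
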